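(* For each $\lambda\in\mathbb N$ and $n\in\mathbb N$ there exists a nonzero $p_{0,\lambda}\in\mathcal S((\mathbb T,\mathbb R)_x)$ such that each $p_{0,\lambda}^{(-j;\lambda)}$, $1\le j\le n$, is well-defined and belongs to $\mathcal S((\mathbb T,\mathbb R)_x)$, and $$\|(p_{0,\lambda},p_{0,\lambda}^{(-1;\lambda)},\dots,p_{0,\lambda}^{(-n;\lambda)})\|_{H^m_x}\lesssim_{m,n}\|p_{0,\lambda}\|_{L^2}\quad\text{for every }m\in\mathbb N_0,$$ with implicit constant independent of $\lambda$, and with one of the following properties: either $p_{0,\lambda},\dots,p^{(-n;\lambda)}_{0,\lambda}$ are all supported in $(-1,1)$; or their Fourier transforms $\mathcal F[p_{0,\lambda}],\dots,\mathcal F[p^{(-n;\lambda)}_{0,\lambda}]$ are all supported in $(-1,1)$.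
   Context: Here $(\mathbb T,\mathbb R)_x$ denotes either $\mathbb T_x=\mathbb R/2\pi\mathbb Z$ or $\mathbb R_x$. Define the right inverse $\partial_x^{-1}$ of $\partial_x$ by $\partial_x^{-1}g(x)=\int_0^xg(x')dx'+\int_0^{2\pi}x'g(x')dx'$ on $\mathbb T_x$ (defined when $\int g\,dx=0$) and $\partial_x^{-1}g(x)=\int_{-\infty}^xg(x')dx'$ on $\mathbb R_x$. For a function $g$ for which these are defined, set $g^{(-1;\lambda)}=i\lambda e^{-i\lambda x}\partial_x^{-1}(e^{i\lambda x}g)$ and inductively $g^{(-j-1;\lambda)}=i\lambda e^{-i\lambda x}\partial_x^{-1}(e^{i\lambda x}g^{(-j;\lambda)})$. *)

(* Defs.v *)
From Stdlib Require Import Reals ZArith.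
From Coquelicot Require Import Coquelicot.
Open Scope R_scope.

(* The two settings (T,R)_x : the torus T = R/2piZ (functions on R that are
   2pi-periodic) or the real line R. *)
Inductive setting := Torus | Line.

Definition re (f : R -> C) : R -> R := fun x => Re (f x).
Definition im (f : R -> C) : R -> R := fun x => Im (f x).

Definition cexpi (t : R) : C := (cos t, sin t).

Definition cDn (k : nat) (f : R -> C) : R -> C :=
  fun x => (Derive_n (re f) k x, Derive_n (im f) k x).

Definition smooth (f : R -> C) : Prop :=
  forall k x, ex_derive_n (re f) k x /\ ex_derive_n (im f) k x.

Definition schwartz (d : setting) (f : R -> C) : Prop :=
  match d with
  | Torus => smooth f /\ forall x, f (x + 2 * PI) = f x
  | Line => smooth f /\
      forall (a b : nat), exists M : R, forall x, Rabs x ^ a * Cmod (cDn b f x) <= M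
  end.

Definition cex_RInt (f : R -> C) (a b : R) : Prop :=
  ex_RInt (re f) a b /\ ex_RInt (im f) a b.
Definition cRInt (f : R -> C) (a b : R) : C :=
  (RInt (re f) a b, RInt (im f) a b).
Definition cex_RInt_gen (f : R -> C) (F G : (R -> Prop) -> Prop) : Prop :=
  ex_RInt_gen (re f) F G /\ ex_RInt_gen (im f) F G.
Definition cRInt_gen (f : R -> C) (F G : (R -> Prop) -> Prop) : C :=
  (RInt_gen (re f) F G, RInt_gen (im f) F G).

Definition antider_defined (d : setting) (g : R -> C) : Prop :=
  match d with
  | Torus => (forall a b, cex_RInt g a b) /\
             (forall a b, cex_RInt (fun t => Cmult (RtoC t) (g t)) a b) /\
             cRInt g 0 (2 * PI) = RtoC 0
  | Line => forall x, cex_RInt_gen g (Rbar_locally m_infty) (at_point x)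
  end.

Definition antider (d : setting) (g : R -> C) : R -> C :=
  match d with
  | Torus => fun x => Cplus (cRInt g 0 x)
                            (cRInt (fun t => Cmult (RtoC t) (g t)) 0 (2 * PI))
  | Line => fun x => cRInt_gen g (Rbar_locally m_infty) (at_point x)
  end.

Definition modul (lam : R) (g : R -> C) : R -> C :=
  fun x => Cmult (cexpi (lam * x)) (g x).

(* g |-> g^{(-1;lam)} = i lam e^{-i lam x} d_x^{-1}(e^{i lam x} g) *)
Definition neg_step (d : setting) (lam : R) (g : R -> C) : R -> C :=
  fun x => Cmult (Cmult (0, lam) (cexpi (- (lam * x))))
                 (antider d (modul lam g) x).

Definition neg_iter (d : setting) (lam : R) (j : nat) (g : R -> C) : R -> C :=
  Nat.iter j (neg_step d lam) g.

Definition neg_step_defined (d : setting) (lam : R) (g : R -> C) : Prop :=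
  antider_defined d (modul lam g).

Definition L2sq (d : setting) (f : R -> C) : R :=
  match d with
  | Torus => RInt (fun x => Cmod (f x) ^ 2) 0 (2 * PI)
  | Line => RInt_gen (fun x => Cmod (f x) ^ 2)
                     (Rbar_locally m_infty) (Rbar_locally p_infty)
  end.

Definition L2norm (d : setting) (f : R -> C) : R := sqrt (L2sq d f).

Definition Hnorm (d : setting) (m : nat) (f : R -> C) : R :=
  sqrt (sum_n (fun k => L2sq d (cDn k f)) m).

Definition tuple_Hnorm (d : setting) (m n : nat) (lam : R) (g : R -> C) : R :=
  sum_n (fun j => Hnorm d m (neg_iter d lam j g)) n.

Definition fourierR (f : R -> C) (xi : R) : C :=
  cRInt_gen (fun x => Cmult (cexpi (- (xi * x))) (f x))
            (Rbar_locally m_infty) (Rbar_locally p_infty).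
Definition fourierT (f : R -> C) (k : Z) : C :=
  cRInt (fun x => Cmult (cexpi (- (IZR k * x))) (f x)) 0 (2 * PI).

(* supp f (closure of {f <> 0}) is contained in (-1,1) *)
Definition supported_in_unit (d : setting) (f : R -> C) : Prop :=
  match d with
  | Torus => exists r, r < 1 /\
      forall x, - PI <= x <= PI -> r < Rabs x -> f x = RtoC 0
  | Line => exists r, r < 1 /\ forall x, r < Rabs x -> f x = RtoC 0
  end.

Definition fourier_supported_in_unit (d : setting) (f : R -> C) : Prop :=
  match d with
  | Torus => exists r, r < 1 /\
      forall k : Z, r < Rabs (IZR k) -> fourierT f k = RtoC 0
  | Line => exists r, r < 1 /\
      forall xi, r < Rabs xi -> fourierR f xi = RtoC 0
  end.

(* Main.v *)
Require Import Defs.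
From Stdlib Require Import Reals ZArith Lra Lia.
From Coquelicot Require Import Coquelicot.
From Stdlib Require Import FunctionalExtensionality Classical IndefiniteDescription.
Open Scope R_scope.

Definition bf (m : nat) (y : R) : R :=
  if Rle_dec y 0 then 0 else (/ y) ^ m * exp (- / y).

Lemma exp_mul_nat (k : nat) (s : R) : exp (INR k * s) = exp s ^ k.
Proof.
  induction k as [|k IH].
  - simpl. rewrite Rmult_0_l, exp_0; reflexivity.
  - rewrite S_INR, <- tech_pow_Rmult, <- IH, Rmult_comm, <- exp_plus. f_equal. ring.
Qed.

Lemma exp_ge_pow (N : nat) (t : R) : (0 < N)%nat -> 0 <= t -> (t / INR N) ^ N <= exp t.
Proof.
  intros HN Ht.
  assert (HNp : 0 < INR N) by (apply lt_0_INR; exact HN).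
  replace t with (INR N * (t / INR N)) at 2 by (field; lra).
  rewrite exp_mul_nat. apply pow_incr. split.
  - apply Rdiv_le_0_compat; lra.
  - assert (H0 : 0 <= t / INR N) by (apply Rdiv_le_0_compat; lra).
    destruct (Rle_lt_or_eq_dec 0 (t / INR N) H0) as [H|H].
    + pose proof (exp_ineq1 (t / INR N) ltac:(lra)); lra.
    + rewrite <- H, exp_0; lra.
Qed.

Lemma bf_pos_eq m y : 0 < y -> bf m y = (/ y) ^ m * exp (- / y).
Proof. intros H; unfold bf; destruct (Rle_dec y 0); [lra|reflexivity]. Qed.
Lemma bf_nonpos m y : y <= 0 -> bf m y = 0.
Proof. intros H; unfold bf; destruct (Rle_dec y 0); [reflexivity|lra]. Qed.


Lemma bf_small m h : 0 < h -> bf m h / h <= INR (S (S m)) ^ (S (S m)) * h.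
Proof.
  intros Hh. rewrite bf_pos_eq by lra.
  set (N := S (S m)).
  set (t := / h).
  assert (Ht : 0 < t) by (apply Rinv_0_lt_compat; lra).
  assert (HN : 0 < INR N) by (apply lt_0_INR; unfold N; lia).
  pose proof (exp_ge_pow N t ltac:(unfold N; lia) ltac:(lra)) as E.
  assert (Hex : 0 < exp t) by apply exp_pos.
  assert (HNN : 0 < INR N ^ N) by (apply pow_lt; lra).
  unfold Rdiv in E; rewrite Rpow_mult_distr, pow_inv in E.
  assert (E2 : t ^ N <= exp t * INR N ^ N).
  { apply Rmult_le_compat_r with (r := INR N ^ N) in E; [|lra].
    rewrite Rmult_assoc, Rinv_l in E by lra. lra. }
  assert (Hht : h * t = 1) by (unfold t; field; lra).
  fold t. rewrite exp_Ropp.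
  assert (Htn : t ^ N = t ^ m * t * t) by (unfold N; simpl; ring).
  apply Rmult_le_reg_r with (r := h * exp t). { apply Rmult_lt_0_compat; lra. }
  replace (t ^ m * / exp t / h * (h * exp t)) with (t ^ m) by (field; lra).
  apply Rmult_le_reg_r with (r := t * t). { apply Rmult_lt_0_compat; lra. }
  replace (INR N ^ N * h * (h * exp t) * (t * t)) with (exp t * INR N ^ N * ((h*t)*(h*t))) by ring.
  rewrite Hht. replace (t ^ m * (t * t)) with (t ^ N) by (rewrite Htn; ring). rewrite !Rmult_1_r. exact E2.
Qed.

Lemma bf_deriv0 m : derivable_pt_lim (bf m) 0 0.
Proof.
  intros eps Heps.
  set (K := INR (S (S m)) ^ (S (S m))).
  assert (HK : 0 < K) by (apply pow_lt; apply lt_0_INR; lia).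
  assert (Hd : 0 < eps / (2 * K)) by (apply Rdiv_lt_0_compat; lra).
  exists (mkposreal _ Hd). intros h Hh0 Hh. simpl in Hh.
  rewrite Rplus_0_l, (bf_nonpos m 0 (Rle_refl 0)), Rminus_0_r, Rminus_0_r.
  destruct (Rle_dec h 0) as [Hn|Hp].
  - rewrite bf_nonpos by exact Hn. unfold Rdiv. rewrite Rmult_0_l, Rabs_R0. exact Heps.
  - assert (Hp' : 0 < h) by lra.
    pose proof (bf_small m h Hp') as B. fold K in B.
    assert (0 <= bf m h / h).
    { rewrite bf_pos_eq by lra. apply Rdiv_le_0_compat; [|lra].
      apply Rmult_le_pos; [apply pow_le; left; apply Rinv_0_lt_compat; lra | left; apply exp_pos]. }
    rewrite Rabs_pos_eq by lra.
    rewrite Rabs_pos_eq in Hh by lra.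
    apply Rle_lt_trans with (K * h); [exact B|].
    apply Rlt_le_trans with (K * (eps / (2 * K))).
    + apply Rmult_lt_compat_l; lra.
    + replace (K * (eps / (2 * K))) with (eps / 2) by (field; lra). lra.
Qed.

Lemma bf_derive m y :
  is_derive (bf m) y (- INR m * bf (S m) y + bf (S (S m)) y).
Proof.
  destruct (Rtotal_order y 0) as [Hn|[H0|Hp]].
  - rewrite !bf_nonpos by lra. replace (- INR m * 0 + 0) with 0 by ring.
    apply is_derive_ext_loc with (f := fun _ => 0).
    + exists (mkposreal (- y) ltac:(lra)). intros t Ht.
      unfold ball in Ht; simpl in Ht; unfold AbsRing_ball, abs, minus, plus, opp in Ht; simpl in Ht.
      rewrite bf_nonpos; [reflexivity|]. apply Rabs_lt_between in Ht. lra.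
    + apply is_derive_Reals, derivable_pt_lim_const.
  - subst y. rewrite !bf_nonpos by lra. replace (- INR m * 0 + 0) with 0 by ring.
    apply is_derive_Reals, bf_deriv0.
  - rewrite !bf_pos_eq by lra.
    apply is_derive_ext_loc with (f := fun t => (/ t) ^ m * exp (- / t)).
    + exists (mkposreal y Hp). intros t Ht.
      unfold ball in Ht; simpl in Ht; unfold AbsRing_ball, abs, minus, plus, opp in Ht; simpl in Ht.
      apply Rabs_lt_between in Ht. rewrite bf_pos_eq by lra. reflexivity.
    + destruct m as [|m].
      * auto_derive; [lra|]. simpl. field. lra.
      * auto_derive; [lra|]. rewrite !S_INR. cbn [pow Nat.pred]. set (X := (/ y) ^ m). replace (match m with 0%nat => 1 | S _ => INR m + 1 end) with (INR m + 1) by (destruct m; simpl; ring). field. lra.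
Qed.

Inductive ex : Type :=
| ECst (c : R) | EVar | EAdd (a b : ex) | EMul (a b : ex)
| ECos (a : ex) | ESin (a : ex) | EBf (m : nat) (a : ex).

Fixpoint ev (e : ex) (x : R) : R :=
  match e with
  | ECst c => c
  | EVar => x
  | EAdd a b => ev a x + ev b x
  | EMul a b => ev a x * ev b x
  | ECos a => cos (ev a x)
  | ESin a => sin (ev a x)
  | EBf m a => bf m (ev a x)
  end.

Fixpoint dx (e : ex) : ex :=
  match e with
  | ECst _ => ECst 0
  | EVar => ECst 1
  | EAdd a b => EAdd (dx a) (dx b)
  | EMul a b => EAdd (EMul (dx a) b) (EMul a (dx b))
  | ECos a => EMul (EMul (ECst (-1)) (ESin a)) (dx a)
  | ESin a => EMul (ECos a) (dx a)
  | EBf m a => EMul (EAdd (EMul (ECst (- INR m)) (EBf (S m) a)) (EBf (S (S m)) a)) (dx a)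
  end.

Lemma ev_derive e x : is_derive (ev e) x (ev (dx e) x).
Proof.
  induction e; simpl.
  - apply is_derive_Reals, derivable_pt_lim_const.
  - apply is_derive_Reals, derivable_pt_lim_id.
  - apply (is_derive_plus (ev e1) (ev e2)); assumption.
  - apply (is_derive_mult (ev e1) (ev e2)); auto. intros; apply Rmult_comm.
  - apply is_derive_Reals. apply is_derive_Reals in IHe.
    replace (-1 * sin (ev e x) * ev (dx e) x) with ((- sin (ev e x)) * ev (dx e) x) by ring.
    apply (derivable_pt_lim_comp (ev e) cos x); auto. apply derivable_pt_lim_cos.
  - apply is_derive_Reals. apply is_derive_Reals in IHe.
    replace (cos (ev e x) * ev (dx e) x) with (cos (ev e x) * ev (dx e) x) by ring.
    apply (derivable_pt_lim_comp (ev e) sin x); auto. apply derivable_pt_lim_sin.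
  - apply is_derive_Reals. apply is_derive_Reals in IHe.
    replace ((- INR m * bf (S m) (ev e x) + bf (S (S m)) (ev e x)) * ev (dx e) x)
      with ((- INR m * bf (S m) (ev e x) + bf (S (S m)) (ev e x)) * ev (dx e) x) by ring.
    apply (derivable_pt_lim_comp (ev e) (bf m) x); auto. apply is_derive_Reals, bf_derive.
Qed.

Lemma ev_Derive_n e k x : Derive_n (ev e) k x = ev (Nat.iter k dx e) x.
Proof.
  revert x; induction k; intros x; simpl; [reflexivity|].
  rewrite (Derive_ext _ (ev (Nat.iter k dx e)) x IHk).
  apply is_derive_unique, ev_derive.
Qed.

Inductive Zg (g : ex) : ex -> Prop :=
| ZB m : Zg g (EBf m g)
| ZML a b : Zg g a -> Zg g (EMul a b)
| ZMR a b : Zg g b -> Zg g (EMul a b)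
| ZA a b : Zg g a -> Zg g b -> Zg g (EAdd a b).

Lemma Zg_dx g e : Zg g e -> Zg g (dx e).
Proof.
  induction 1; simpl.
  - apply ZML, ZA; [apply ZMR, ZB | apply ZB].
  - apply ZA; [apply ZML; auto | apply ZML; auto].
  - apply ZA; [apply ZMR; auto | apply ZMR; auto].
  - apply ZA; auto.
Qed.

Lemma Zg_ev g e x : Zg g e -> ev g x <= 0 -> ev e x = 0.
Proof.
  intros HZ Hg; induction HZ; simpl.
  - apply bf_nonpos; auto.
  - rewrite IHHZ; ring.
  - rewrite IHHZ; ring.
  - rewrite IHHZ1, IHHZ2; ring.
Qed.

Lemma Zg_iter g k : Zg g (Nat.iter k dx (EBf 0 g)).
Proof. induction k; simpl; [apply ZB | apply Zg_dx; auto]. Qed.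

Lemma bump_vanish g k x : ev g x <= 0 -> Derive_n (ev (EBf 0 g)) k x = 0.
Proof. intros H; rewrite ev_Derive_n; apply (Zg_ev g); auto; apply Zg_iter. Qed.

Section Abs.
Variable chi : R -> R.
Hypothesis chi_der : forall a x, is_derive (Derive_n chi a) x (Derive_n chi (S a) x).
Notation D := (Derive_n chi).

Definition lin (c : nat -> R) (N k : nat) (x : R) : R :=
  sum_f_R0 (fun a => c a * D (a + k) x) N.

Lemma lin_derive c N k x : is_derive (lin c N k) x (lin c N (S k) x).
Proof.
  unfold lin. induction N as [|N IH]; simpl.
  - try rewrite Nat.add_succ_r. apply is_derive_Reals. apply derivable_pt_lim_scal.
    apply is_derive_Reals, chi_der.
  - apply (is_derive_plus (fun x => sum_f_R0 (fun a => c a * D (a + k) x) N)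
                          (fun x => c (S N) * D (S (N + k)) x)); [exact IH|].
    try rewrite Nat.add_succ_r. apply is_derive_Reals. apply derivable_pt_lim_scal.
    apply is_derive_Reals, chi_der.
Qed.

Ltac solve_lin := repeat match goal with
  | |- _ /\ _ => split | |- True => exact I
  | |- ex_derive _ _ => eexists; apply lin_derive end.

Lemma lin_Derive_n c N k x : Derive_n (lin c N 0) k x = lin c N k x.
Proof.
  revert x; induction k; intros x; simpl; [reflexivity|].
  rewrite (Derive_ext _ (lin c N k) x IHk).
  apply is_derive_unique, lin_derive.
Qed.

Lemma lin_ex_derive_n c N k x : ex_derive_n (lin c N 0) k x.
Proof.
  destruct k; simpl; [exact I|].
  apply ex_derive_ext with (f := lin c N k).
  - intros t; symmetry; apply lin_Derive_n.
  - eexists; apply lin_derive.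
Qed.

Lemma lin_cont c N k x : continuous (lin c N k) x.
Proof. apply (ex_derive_continuous (lin c N k)). eexists; apply lin_derive. Qed.

Lemma lin_ext c c' N k x : (forall a, (a <= N)%nat -> c a = c' a) -> lin c N k x = lin c' N k x.
Proof. intros H; unfold lin; apply sum_eq; intros i Hi; rewrite H; auto. Qed.

Lemma lin_plus c c' N k x : lin (fun a => c a + c' a) N k x = lin c N k x + lin c' N k x.
Proof. unfold lin. rewrite <- plus_sum. apply sum_eq; intros; ring. Qed.

Lemma lin_scal r c N k x : lin (fun a => r * c a) N k x = r * lin c N k x.
Proof. unfold lin. rewrite scal_sum. apply sum_eq; intros; ring. Qed.

Definition sh (s : nat -> R) (a : nat) : R := match a with O => 0 | S a' => s a' end.

Lemma lin_sh c N k x : c N = 0 -> lin (sh c) N k x = lin c N (S k) x.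
Proof.
  intros HN. destruct N as [|N].
  - unfold lin; simpl. rewrite HN; ring.
  - unfold lin. rewrite decomp_sum by lia. simpl (sh c 0). rewrite Rmult_0_l, Rplus_0_l.
    simpl pred. cbn [sum_f_R0]. rewrite HN, Rmult_0_l, Rplus_0_r.
    apply sum_eq; intros i Hi. simpl. rewrite Nat.add_succ_r. reflexivity.
Qed.


Definition cf : Type := ((nat -> R) * (nat -> R))%type.
Definition Tc (lam : R) (c : cf) : cf :=
  (fun a => sh (fst c) a + (- lam) * snd c a, fun a => sh (snd c) a + lam * fst c a).
Definition Mc (lam : R) (c : cf) : cf :=
  (fun a => (- lam) * snd c a, fun a => lam * fst c a).
Definition LP (N : nat) (c : cf) (x : R) : C := (lin (fst c) N 0 x, lin (snd c) N 0 x).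

Lemma LP_M lam N c x : LP N (Mc lam c) x = Cmult (0, lam) (LP N c x).
Proof.
  unfold LP, Mc, Cmult; simpl. rewrite !lin_scal. f_equal; ring.
Qed.

Lemma Tc1 lam N c x : fst c N = 0 -> snd c N = 0 ->
  lin (fst (Tc lam c)) N 0 x = lin (fst c) N 1 x - lam * lin (snd c) N 0 x.
Proof.
  intros H1 H2. unfold Tc; simpl. rewrite lin_plus, lin_scal, lin_sh by auto. ring.
Qed.

Lemma Tc2 lam N c x : fst c N = 0 -> snd c N = 0 ->
  lin (snd (Tc lam c)) N 0 x = lin (snd c) N 1 x + lam * lin (fst c) N 0 x.
Proof.
  intros H1 H2. unfold Tc; simpl. rewrite lin_plus, lin_scal, lin_sh by auto. ring.
Qed.

Definition Hf (lam : R) (N : nat) (c : cf) (t : R) : C := Cmult (cexpi (lam * t)) (LP N c t).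

Lemma Hf_re_derive lam N c t : fst c N = 0 -> snd c N = 0 ->
  is_derive (re (Hf lam N c)) t (re (modul lam (LP N (Tc lam c))) t).
Proof.
  intros H1 H2. unfold re, modul. 
  replace (LP N (Tc lam c) t) with (lin (fst c) N 1 t - lam * lin (snd c) N 0 t,
     lin (snd c) N 1 t + lam * lin (fst c) N 0 t)
    by (unfold LP; rewrite Tc1, Tc2 by auto; reflexivity).
  unfold Hf, LP, cexpi, Cmult; simpl.
  auto_derive.
  - solve_lin.
  - rewrite !(is_derive_unique _ _ _ (lin_derive _ _ _ _)). ring.
Qed.

Lemma Hf_im_derive lam N c t : fst c N = 0 -> snd c N = 0 ->
  is_derive (im (Hf lam N c)) t (im (modul lam (LP N (Tc lam c))) t).
Proof.
  intros H1 H2. unfold im, modul. 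
  replace (LP N (Tc lam c) t) with (lin (fst c) N 1 t - lam * lin (snd c) N 0 t,
     lin (snd c) N 1 t + lam * lin (fst c) N 0 t)
    by (unfold LP; rewrite Tc1, Tc2 by auto; reflexivity).
  unfold Hf, LP, cexpi, Cmult; simpl.
  auto_derive.
  - solve_lin.
  - rewrite !(is_derive_unique _ _ _ (lin_derive _ _ _ _)). ring.
Qed.


Lemma neg_step_val d lam N c x :
  antider d (modul lam (LP N (Tc lam c))) x = Hf lam N c x ->
  neg_step d lam (LP N (Tc lam c)) x = LP N (Mc lam c) x.
Proof.
  intros H. unfold neg_step. rewrite H, LP_M. unfold Hf, cexpi.
  destruct (LP N c x) as [a b].
  pose proof (sin2_cos2 (lam * x)) as E. unfold Rsqr in E.
  unfold Cmult; simpl. rewrite cos_neg, sin_neg.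
  set (co := cos (lam * x)) in *. set (si := sin (lam * x)) in *.
  f_equal.
  - transitivity (- lam * b * (si * si + co * co)); [ring|rewrite E; ring].
  - transitivity (lam * a * (si * si + co * co)); [ring|rewrite E; ring].
Qed.


Lemma modul_re_exd lam N c t : ex_derive (re (modul lam (LP N c))) t.
Proof.
  unfold re, modul, LP, cexpi, Cmult; simpl. auto_derive.
  solve_lin.
Qed.
Lemma modul_im_exd lam N c t : ex_derive (im (modul lam (LP N c))) t.
Proof.
  unfold im, modul, LP, cexpi, Cmult; simpl. auto_derive.
  solve_lin.
Qed.
Lemma modult_re_exd lam N c t :
  ex_derive (re (fun t => Cmult (RtoC t) (modul lam (LP N c) t))) t.
Proof.
  unfold re, modul, LP, cexpi, Cmult, RtoC; simpl. auto_derive.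
  solve_lin.
Qed.
Lemma modult_im_exd lam N c t :
  ex_derive (im (fun t => Cmult (RtoC t) (modul lam (LP N c) t))) t.
Proof.
  unfold im, modul, LP, cexpi, Cmult, RtoC; simpl. auto_derive.
  solve_lin.
Qed.

Lemma ex_RInt_of_exd (f : R -> R) a b : (forall t, ex_derive f t) -> ex_RInt f a b.
Proof.
  intros H. apply (ex_RInt_continuous (V:=R_CompleteNormedModule)). intros z _. apply (ex_derive_continuous f), H.
Qed.

Lemma is_RInt_of_derive (F f : R -> R) a b :
  (forall t, is_derive F t (f t)) -> (forall t, ex_derive f t) -> is_RInt f a b (F b - F a).
Proof.
  intros H1 H2. apply (is_RInt_derive F f a b).
  - intros; apply H1.
  - intros; apply (ex_derive_continuous f), H2.
Qed.


Lemma LP_zero N c t : (forall a, D a t = 0) -> LP N c t = (0, 0).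
Proof.
  intros H. unfold LP, lin. f_equal; rewrite (sum_eq _ (fun _ => 0));
  try (intros i _; rewrite H; ring); clear; induction N; simpl; try rewrite IHN; ring.
Qed.

Lemma Hf_zero lam N c t : (forall a, D a t = 0) -> Hf lam N c t = (0, 0).
Proof. intros H. unfold Hf. rewrite LP_zero by auto. unfold Cmult; simpl. f_equal; ring. Qed.

Lemma RInt_re_H lam N c a b : fst c N = 0 -> snd c N = 0 ->
  RInt (re (modul lam (LP N (Tc lam c)))) a b = re (Hf lam N c) b - re (Hf lam N c) a.
Proof.
  intros H1 H2. apply is_RInt_unique, is_RInt_of_derive.
  - intros; apply Hf_re_derive; auto.
  - intros; apply modul_re_exd.
Qed.
Lemma RInt_im_H lam N c a b : fst c N = 0 -> snd c N = 0 ->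
  RInt (im (modul lam (LP N (Tc lam c)))) a b = im (Hf lam N c) b - im (Hf lam N c) a.
Proof.
  intros H1 H2. apply is_RInt_unique, is_RInt_of_derive.
  - intros; apply Hf_im_derive; auto.
  - intros; apply modul_im_exd.
Qed.

Lemma RInt_t_re lam N c' a b :
  fst c' N = 0 -> snd c' N = 0 -> fst (Tc lam c') N = 0 -> snd (Tc lam c') N = 0 ->
  RInt (re (fun t => Cmult (RtoC t) (modul lam (LP N (Tc lam (Tc lam c'))) t))) a b
  = (b * re (Hf lam N (Tc lam c')) b - re (Hf lam N c') b)
    - (a * re (Hf lam N (Tc lam c')) a - re (Hf lam N c') a).
Proof.
  intros H1 H2 H3 H4. apply is_RInt_unique.
  apply (is_RInt_of_derive (fun t => t * re (Hf lam N (Tc lam c')) t - re (Hf lam N c') t)).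
  - intros t.
    assert (E : re (fun t => Cmult (RtoC t) (modul lam (LP N (Tc lam (Tc lam c'))) t)) t
      = (1 * re (Hf lam N (Tc lam c')) t + t * re (modul lam (LP N (Tc lam (Tc lam c')))) t)
        - re (modul lam (LP N (Tc lam c'))) t).
    { unfold re, Hf, modul, RtoC, Cmult; simpl. ring. }
    rewrite E.
    apply (is_derive_minus (fun t => t * re (Hf lam N (Tc lam c')) t) (re (Hf lam N c'))).
    + apply (is_derive_mult (fun t => t) (re (Hf lam N (Tc lam c')))).
      * apply is_derive_Reals, derivable_pt_lim_id.
      * apply Hf_re_derive; auto.
      * intros; apply Rmult_comm.
    + apply Hf_re_derive; auto.
  - intros; apply modult_re_exd.
Qed.

Lemma RInt_t_im lam N c' a b :
  fst c' N = 0 -> snd c' N = 0 -> fst (Tc lam c') N = 0 -> snd (Tc lam c') N = 0 ->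
  RInt (im (fun t => Cmult (RtoC t) (modul lam (LP N (Tc lam (Tc lam c'))) t))) a b
  = (b * im (Hf lam N (Tc lam c')) b - im (Hf lam N c') b)
    - (a * im (Hf lam N (Tc lam c')) a - im (Hf lam N c') a).
Proof.
  intros H1 H2 H3 H4. apply is_RInt_unique.
  apply (is_RInt_of_derive (fun t => t * im (Hf lam N (Tc lam c')) t - im (Hf lam N c') t)).
  - intros t.
    assert (E : im (fun t => Cmult (RtoC t) (modul lam (LP N (Tc lam (Tc lam c'))) t)) t
      = (1 * im (Hf lam N (Tc lam c')) t + t * im (modul lam (LP N (Tc lam (Tc lam c')))) t)
        - im (modul lam (LP N (Tc lam c'))) t).
    { unfold im, Hf, modul, RtoC, Cmult; simpl. ring. }
    rewrite E.
    apply (is_derive_minus (fun t => t * im (Hf lam N (Tc lam c')) t) (im (Hf lam N c'))).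
    + apply (is_derive_mult (fun t => t) (im (Hf lam N (Tc lam c')))).
      * apply is_derive_Reals, derivable_pt_lim_id.
      * apply Hf_im_derive; auto.
      * intros; apply Rmult_comm.
    + apply Hf_im_derive; auto.
  - intros; apply modult_im_exd.
Qed.


Lemma torus_antider lam N c' x :
  (forall a, D a 0 = 0) -> (forall a, D a (2 * PI) = 0) ->
  fst c' N = 0 -> snd c' N = 0 -> fst (Tc lam c') N = 0 -> snd (Tc lam c') N = 0 ->
  antider Torus (modul lam (LP N (Tc lam (Tc lam c')))) x = Hf lam N (Tc lam c') x.
Proof.
  intros Z0 Z2 H1 H2 H3 H4. unfold antider, cRInt.
  rewrite RInt_re_H, RInt_im_H, RInt_t_re, RInt_t_im by auto.
  unfold re, im.
  rewrite !(Hf_zero _ _ _ 0), !(Hf_zero _ _ _ (2 * PI)) by auto.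
  destruct (Hf lam N (Tc lam c') x) as [u v]. unfold Cplus; simpl. f_equal; ring.
Qed.

Lemma torus_defined lam N c' :
  (forall a, D a 0 = 0) -> (forall a, D a (2 * PI) = 0) ->
  fst c' N = 0 -> snd c' N = 0 -> fst (Tc lam c') N = 0 -> snd (Tc lam c') N = 0 ->
  antider_defined Torus (modul lam (LP N (Tc lam (Tc lam c')))).
Proof.
  intros Z0 Z2 H1 H2 H3 H4. unfold antider_defined, cex_RInt. split; [|split].
  - intros a b; split; apply ex_RInt_of_exd; intros; [apply modul_re_exd|apply modul_im_exd].
  - intros a b; split; apply ex_RInt_of_exd; intros; [apply modult_re_exd|apply modult_im_exd].
  - unfold cRInt. rewrite RInt_re_H, RInt_im_H by auto. unfold re, im.
    rewrite !(Hf_zero _ _ _ 0), !(Hf_zero _ _ _ (2 * PI)) by auto.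
    unfold RtoC; simpl. f_equal; ring.
Qed.

Lemma is_RInt_gen_ev (f : R -> R) Fa Fb l :
  filter_prod Fa Fb (fun ab => is_RInt f (fst ab) (snd ab) l) -> is_RInt_gen f Fa Fb l.
Proof.
  intros [P Q HP HQ H]. unfold is_RInt_gen, filterlimi, filter_le, filtermapi.
  intros S HS. apply (Filter_prod _ _ _ P Q HP HQ).
  intros a b Ha Hb. exists l. split; [apply H; auto | apply locally_singleton; exact HS].
Qed.

Lemma line_is_RInt_gen lam N c x (fr : C -> R) :
  (forall a t, t <= 1/4 -> D a t = 0) ->
  (forall t, is_derive (fun s => fr (Hf lam N c s)) t (fr (modul lam (LP N (Tc lam c)) t))) ->
  (forall t, ex_derive (fun s => fr (modul lam (LP N (Tc lam c)) s)) t) ->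
  fr (0, 0) = 0 ->
  is_RInt_gen (fun s => fr (modul lam (LP N (Tc lam c)) s)) (Rbar_locally m_infty) (at_point x)
    (fr (Hf lam N c x)).
Proof.
  intros Z Hd He F0. apply is_RInt_gen_ev.
  apply (Filter_prod _ _ _ (fun a => a < Rmin x (1/4)) (fun b => b = x)).
  - exists (Rmin x (1/4)). auto.
  - reflexivity.
  - intros a b Ha Hb. simpl. subst b.
    replace (fr (Hf lam N c x)) with (fr (Hf lam N c x) - fr (Hf lam N c a)).
    + apply (is_RInt_of_derive (fun s => fr (Hf lam N c s))); auto.
    + rewrite (Hf_zero lam N c a); [rewrite F0; ring|]. intros k; apply Z.
      pose proof (Rmin_r x (1/4)); lra.
Qed.

Lemma line_antider lam N c x :
  (forall a t, t <= 1/4 -> D a t = 0) -> fst c N = 0 -> snd c N = 0 ->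
  antider Line (modul lam (LP N (Tc lam c))) x = Hf lam N c x
  /\ antider_defined Line (modul lam (LP N (Tc lam c))).
Proof.
  intros Z H1 H2.
  assert (A1 : forall x, is_RInt_gen (re (modul lam (LP N (Tc lam c)))) (Rbar_locally m_infty) (at_point x)
    (re (Hf lam N c) x)).
  { intros y. apply (line_is_RInt_gen lam N c y fst); auto.
    - intros; apply Hf_re_derive; auto.
    - intros; apply modul_re_exd. }
  assert (A2 : forall x, is_RInt_gen (im (modul lam (LP N (Tc lam c)))) (Rbar_locally m_infty) (at_point x)
    (im (Hf lam N c) x)).
  { intros y. apply (line_is_RInt_gen lam N c y snd); auto.
    - intros; apply Hf_im_derive; auto.
    - intros; apply modul_im_exd. }
  split.
  - unfold antider, cRInt_gen.
    rewrite (is_RInt_gen_unique _ _ (A1 x)), (is_RInt_gen_unique _ _ (A2 x)).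
    unfold re, im. destruct (Hf lam N c x); reflexivity.
  - intros y. split; eexists; [apply A1|apply A2].
Qed.


Definition Hyp (d : setting) : Prop :=
  match d with
  | Torus => (forall a, D a 0 = 0) /\ (forall a, D a (2 * PI) = 0)
  | Line => forall a t, t <= 1/4 -> D a t = 0
  end.

Lemma step_lemma d lam N c' : Hyp d ->
  fst c' N = 0 -> snd c' N = 0 -> fst (Tc lam c') N = 0 -> snd (Tc lam c') N = 0 ->
  neg_step d lam (LP N (Tc lam (Tc lam c'))) = LP N (Mc lam (Tc lam c'))
  /\ neg_step_defined d lam (LP N (Tc lam (Tc lam c'))).
Proof.
  intros Hd H1 H2 H3 H4. destruct d.
  - destruct Hd as [Z0 Z2]. split.
    + extensionality x. apply neg_step_val. apply torus_antider; auto.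
    + apply torus_defined; auto.
  - split.
    + extensionality x. apply neg_step_val. apply line_antider; auto.
    + apply line_antider; auto.
Qed.

Definition supp (c : cf) (s : nat) : Prop := forall a, (s < a)%nat -> fst c a = 0 /\ snd c a = 0.
Definition e0 : cf := (fun a => match a with O => 1 | _ => 0 end, fun _ => 0).

Lemma supp_e0 : supp e0 0.
Proof. intros a Ha. destruct a; [lia|]. simpl; auto. Qed.
Lemma supp_T lam c s : supp c s -> supp (Tc lam c) (S s).
Proof.
  intros H a Ha. destruct a as [|a]; [lia|]. unfold Tc; simpl.
  destruct (H a ltac:(lia)) as [A B]. destruct (H (S a) ltac:(lia)) as [A' B'].
  rewrite A, B, A', B'. split; ring.
Qed.
Lemma supp_M lam c s : supp c s -> supp (Mc lam c) s.
Proof. intros H a Ha. destruct (H a Ha) as [A B]. unfold Mc; simpl. rewrite A, B; split; ring. Qed.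
Lemma supp_iter lam j k : supp (Nat.iter j (Mc lam) (Nat.iter k (Tc lam) e0)) k.
Proof.
  induction j; simpl.
  - induction k; simpl; [apply supp_e0|apply supp_T; auto].
  - apply supp_M; auto.
Qed.
Lemma supp_weak c s s' : supp c s -> (s <= s')%nat -> supp c s'.
Proof. intros H Hs a Ha; apply H; lia. Qed.

Lemma MT_comm lam c : Mc lam (Tc lam c) = Tc lam (Mc lam c).
Proof.
  unfold Mc, Tc; simpl. f_equal; extensionality a; destruct a; simpl; ring.
Qed.
Lemma iterM_T lam j c : Nat.iter j (Mc lam) (Tc lam c) = Tc lam (Nat.iter j (Mc lam) c).
Proof. induction j; simpl; [reflexivity|rewrite IHj; apply MT_comm]. Qed.

Definition cj (lam : R) (n j : nat) : cf := Nat.iter j (Mc lam) (Nat.iter (n + 1 - j) (Tc lam) e0).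
Definition pfun (lam : R) (n : nat) : R -> C := LP (n + 1) (cj lam n 0).

Lemma cj_split lam n j : (j < n)%nat ->
  cj lam n j = Tc lam (Tc lam (Nat.iter j (Mc lam) (Nat.iter (n - 1 - j) (Tc lam) e0))).
Proof.
  intros H. unfold cj. replace (n + 1 - j)%nat with (S (S (n - 1 - j))) by lia.
  simpl. rewrite !iterM_T. reflexivity.
Qed.

Lemma neg_iter_formula d lam n j : Hyp d -> (j <= n)%nat ->
  neg_iter d lam j (pfun lam n) = LP (n + 1) (cj lam n j)
  /\ ((j < n)%nat -> neg_step_defined d lam (neg_iter d lam j (pfun lam n))).
Proof.
  intros Hd. induction j; intros Hj.
  - split; [reflexivity|]. intros Hn. change (neg_iter d lam 0 (pfun lam n)) with (LP (n+1) (cj lam n 0)).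
    rewrite cj_split by lia.
    set (c' := Nat.iter 0 (Mc lam) (Nat.iter (n - 1 - 0) (Tc lam) e0)).
    assert (S1 : supp c' (n - 1)) by (replace (n - 1)%nat with (n - 1 - 0)%nat by lia; apply supp_iter).
    assert (S2 : supp (Tc lam c') n) by (apply (supp_weak _ (S (n - 1))); [apply supp_T; auto | lia]).
    destruct (S1 (n+1)%nat ltac:(lia)). destruct (S2 (n+1)%nat ltac:(lia)).
    apply step_lemma; auto.
  - destruct (IHj ltac:(lia)) as [IH _].
    assert (E : neg_iter d lam (S j) (pfun lam n) = LP (n + 1) (cj lam n (S j))).
    { change (neg_iter d lam (S j) (pfun lam n)) with (neg_step d lam (neg_iter d lam j (pfun lam n))).
      rewrite IH. rewrite cj_split by lia.
      set (c' := Nat.iter j (Mc lam) (Nat.iter (n - 1 - j) (Tc lam) e0)).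
      assert (S1 : supp c' (n - 1 - j)) by apply supp_iter.
      assert (S2 : supp (Tc lam c') (S (n - 1 - j))) by (apply supp_T; auto).
      destruct (S1 (n+1)%nat ltac:(lia)). destruct (S2 (n+1)%nat ltac:(lia)).
      rewrite (proj1 (step_lemma d lam (n+1) c' Hd ltac:(auto) ltac:(auto) ltac:(auto) ltac:(auto))).
      unfold cj, c'. simpl. rewrite <- iterM_T. f_equal. f_equal.
      replace (n + 1 - S j)%nat with (S (n - 1 - j)) by lia. reflexivity. }
    split; [exact E|]. intros Hn. rewrite E. rewrite cj_split by lia.
    set (c' := Nat.iter (S j) (Mc lam) (Nat.iter (n - 1 - S j) (Tc lam) e0)).
    assert (S1 : supp c' (n - 1 - S j)) by apply supp_iter.
    assert (S2 : supp (Tc lam c') (S (n - 1 - S j))) by (apply supp_T; auto).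
    destruct (S1 (n+1)%nat ltac:(lia)). destruct (S2 (n+1)%nat ltac:(lia)).
    apply step_lemma; auto.
Qed.


Definition LPk (N : nat) (c : cf) (k : nat) (x : R) : C := (lin (fst c) N k x, lin (snd c) N k x).

Lemma cDn_LP N c k : cDn k (LP N c) = LPk N c k.
Proof.
  extensionality x. unfold cDn, LPk. f_equal.
  - change (re (LP N c)) with (lin (fst c) N 0). apply lin_Derive_n.
  - change (im (LP N c)) with (lin (snd c) N 0). apply lin_Derive_n.
Qed.

Lemma Cmod2 z : Cmod z ^ 2 = fst z ^ 2 + snd z ^ 2.
Proof. unfold Cmod. apply pow2_sqrt. nra. Qed.

Lemma Cmod_le_sum z : Cmod z <= Rabs (fst z) + Rabs (snd z).
Proof.
  unfold Cmod. rewrite <- (sqrt_pow2 (Rabs (fst z) + Rabs (snd z))).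
  - apply sqrt_le_1_alt. pose proof (Rabs_pos (fst z)). pose proof (Rabs_pos (snd z)).
    rewrite <- (pow2_abs (fst z)), <- (pow2_abs (snd z)). nra.
  - pose proof (Rabs_pos (fst z)). pose proof (Rabs_pos (snd z)). lra.
Qed.

Lemma D_cont i x : continuity_pt (D i) x.
Proof.
  apply derivable_continuous_pt. exists (D (S i) x). apply is_derive_Reals, chi_der.
Qed.

Lemma D_bound K lo hi : lo <= hi -> exists M, 0 <= M /\
  forall i x, (i <= K)%nat -> lo <= x <= hi -> Rabs (D i x) <= M.
Proof.
  intros Hlh. induction K as [|K IH].
  - destruct (continuity_ab_maj (D 0) lo hi Hlh (fun c _ => D_cont 0 c)) as [x1 [H1 _]].
    destruct (continuity_ab_min (D 0) lo hi Hlh (fun c _ => D_cont 0 c)) as [x2 [H2 _]].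
    exists (Rabs (D 0 x1) + Rabs (D 0 x2)). split; [pose proof (Rabs_pos (D 0 x1)); pose proof (Rabs_pos (D 0 x2)); lra|].
    intros i x Hi Hx. replace i with 0%nat by lia. specialize (H1 x Hx). specialize (H2 x Hx).
    unfold Rabs at 1 2 3. repeat destruct Rcase_abs; lra.
  - destruct IH as [M0 [HM0 IH]].
    destruct (continuity_ab_maj (D (S K)) lo hi Hlh (fun c _ => D_cont (S K) c)) as [x1 [H1 _]].
    destruct (continuity_ab_min (D (S K)) lo hi Hlh (fun c _ => D_cont (S K) c)) as [x2 [H2 _]].
    exists (M0 + Rabs (D (S K) x1) + Rabs (D (S K) x2)).
    split; [pose proof (Rabs_pos (D (S K) x1)); pose proof (Rabs_pos (D (S K) x2)); lra|].
    intros i x Hi Hx. destruct (Nat.eq_dec i (S K)) as [->|Hne].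
    + specialize (H1 x Hx). specialize (H2 x Hx).
      pose proof (Rabs_pos (D (S K) x1)); pose proof (Rabs_pos (D (S K) x2)).
      unfold Rabs at 1 2 3. repeat destruct Rcase_abs; lra.
    + specialize (IH i x ltac:(lia) Hx).
      pose proof (Rabs_pos (D (S K) x1)); pose proof (Rabs_pos (D (S K) x2)). lra.
Qed.

Lemma lin_bound f N k x b M : (forall a, Rabs (f a) <= b) ->
  (forall i, (i <= N + k)%nat -> Rabs (D i x) <= M) ->
  Rabs (lin f N k x) <= b * M * INR (S N).
Proof.
  intros Hf HD. unfold lin. eapply Rle_trans; [apply sum_f_R0_triangle|].
  rewrite <- sum_cte. apply sum_Rle. intros a Ha. rewrite Rabs_mult.
  apply Rmult_le_compat; try apply Rabs_pos; auto. apply HD; lia.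
Qed.

Definition Bnd (c : cf) (b : R) : Prop := forall a, Rabs (fst c a) <= b /\ Rabs (snd c a) <= b.

Lemma Bnd_T lam c b : 1 <= lam -> 0 <= b -> Bnd c b -> Bnd (Tc lam c) (2 * lam * b).
Proof.
  intros Hl Hb H a. unfold Tc; simpl.
  assert (Hs : forall f : nat -> R, (forall a, Rabs (f a) <= b) -> Rabs (sh f a) <= b).
  { intros f Hf. destruct a; simpl; [rewrite Rabs_R0; lra|apply Hf]. }
  destruct (H a) as [A B].
  pose proof (Hs (fst c) (fun a => proj1 (H a))). pose proof (Hs (snd c) (fun a => proj2 (H a))).
  split.
  - eapply Rle_trans; [apply Rabs_triang|]. rewrite Rabs_mult, Rabs_Ropp, (Rabs_pos_eq lam) by lra. nra.
  - eapply Rle_trans; [apply Rabs_triang|]. rewrite Rabs_mult, (Rabs_pos_eq lam) by lra. nra.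
Qed.

Lemma Bnd_M lam c b : 1 <= lam -> 0 <= b -> Bnd c b -> Bnd (Mc lam c) (2 * lam * b).
Proof.
  intros Hl Hb H a. unfold Mc; simpl. destruct (H a) as [A B].
  rewrite !Rabs_mult, Rabs_Ropp, (Rabs_pos_eq lam) by lra. split; nra.
Qed.

Lemma Bnd_e0 : Bnd e0 1.
Proof. intros a. unfold e0; simpl. destruct a; rewrite ?Rabs_R1, ?Rabs_R0; lra. Qed.

Lemma Bnd_iter lam j k : 1 <= lam -> Bnd (Nat.iter j (Mc lam) (Nat.iter k (Tc lam) e0)) ((2 * lam) ^ (j + k)).
Proof.
  intros Hl. induction j; simpl.
  - induction k; simpl; [apply Bnd_e0|].
    apply Bnd_T; auto. apply pow_le; lra.
  - apply Bnd_M; auto. apply pow_le; lra.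
Qed.

Lemma Bnd_cj lam n j : 1 <= lam -> (j <= n)%nat -> Bnd (cj lam n j) ((2 * lam) ^ (n + 1)).
Proof.
  intros Hl Hj. unfold cj. replace (n + 1)%nat with (j + (n + 1 - j))%nat at 2 by lia.
  apply Bnd_iter; auto.
Qed.


Definition hi (d : setting) : R := match d with Torus => 2 * PI | Line => 1 end.
Lemma hi_pos d : 0 < hi d.
Proof. destruct d; simpl; [pose proof PI_RGT_0; lra|lra]. Qed.

Definition HypN (d : setting) : Prop :=
  match d with
  | Torus => True
  | Line => forall a t, (t <= 1/4 \/ 3/4 <= t) -> D a t = 0
  end.

Lemma lin_zero f N k t : (forall a, D a t = 0) -> lin f N k t = 0.
Proof.
  intros H. unfold lin. rewrite (sum_eq _ (fun _ => 0)).
  - rewrite sum_cte; ring.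
  - intros i _; rewrite H; ring.
Qed.

Lemma sq_lin_exd f g N k t : ex_derive (fun x => lin f N k x ^ 2 + lin g N k x ^ 2) t.
Proof. auto_derive. solve_lin. Qed.

Lemma scal_R (a b : R) : scal a b = a * b.
Proof. reflexivity. Qed.
Lemma plus_R (a b : R) : plus a b = a + b.
Proof. reflexivity. Qed.

Lemma L2sq_LPk d N c k : HypN d ->
  L2sq d (LPk N c k) = RInt (fun x => lin (fst c) N k x ^ 2 + lin (snd c) N k x ^ 2) 0 (hi d).
Proof.
  intros Hd. set (h := fun x => lin (fst c) N k x ^ 2 + lin (snd c) N k x ^ 2).
  assert (Eh : (fun x => Cmod (LPk N c k x) ^ 2) = h).
  { extensionality x. rewrite Cmod2. reflexivity. }
  destruct d; unfold L2sq; rewrite Eh; simpl; [reflexivity|].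
  apply is_RInt_gen_unique. apply is_RInt_gen_ev.
  apply (Filter_prod _ _ _ (fun a => a < 0) (fun b => 1 < b)).
  - exists 0; auto.
  - exists 1; auto.
  - intros a b Ha Hb; simpl.
    assert (hz : forall x, (x <= 1/4 \/ 3/4 <= x) -> h x = 0).
    { intros x Hx. unfold h. rewrite !lin_zero by (intros; apply Hd; auto). ring. }
    assert (Z1 : is_RInt h a 0 0).
    { apply is_RInt_ext with (fun _ => 0).
      - intros x Hx. rewrite Rmin_left, Rmax_right in Hx by lra. rewrite hz; auto; lra.
      - pose proof (is_RInt_const (V:=R_NormedModule) a 0 0) as Hc. rewrite scal_R, Rmult_0_r in Hc. exact Hc. }
    assert (Z2 : is_RInt h 1 b 0).
    { apply is_RInt_ext with (fun _ => 0).
      - intros x Hx. rewrite Rmin_left, Rmax_right in Hx by lra. rewrite hz; auto; lra.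
      - pose proof (is_RInt_const (V:=R_NormedModule) 1 b 0) as Hc. rewrite scal_R, Rmult_0_r in Hc. exact Hc. }
    assert (M : is_RInt h 0 1 (RInt h 0 1)).
    { apply (RInt_correct (V:=R_CompleteNormedModule)). apply ex_RInt_of_exd. intros; apply sq_lin_exd. }
    pose proof (is_RInt_Chasles h a 0 1 _ _ Z1 M) as C1.
    pose proof (is_RInt_Chasles h a 1 b _ _ C1 Z2) as C2.
    rewrite !plus_R in C2. replace (RInt h 0 1) with (0 + RInt h 0 1 + 0) by ring. exact C2.
Qed.

Lemma Hnorm_bound d m N c b M : HypN d -> 0 <= b -> Bnd c b ->
  (forall i x, (i <= N + m)%nat -> 0 <= x <= hi d -> Rabs (D i x) <= M) ->
  Hnorm d m (LP N c) <= sqrt (INR (S m) * (hi d * (2 * (b * M * INR (S N)) ^ 2))).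
Proof.
  intros Hd Hb Hc HM. unfold Hnorm. apply sqrt_le_1_alt.
  rewrite sum_n_Reals, Rmult_comm, <- (sum_cte (hi d * (2 * (b * M * INR (S N)) ^ 2)) m).
  apply sum_Rle. intros k Hk.
  rewrite cDn_LP, L2sq_LPk by auto.
  pose proof (hi_pos d) as Hh.
  eapply Rle_trans.
  - apply (RInt_le _ (fun _ => 2 * (b * M * INR (S N)) ^ 2)).
    + lra.
    + apply ex_RInt_of_exd. intros; apply sq_lin_exd.
    + apply ex_RInt_const.
    + intros x Hx.
      assert (B1 : Rabs (lin (fst c) N k x) <= b * M * INR (S N)).
      { apply lin_bound; [intros a; apply Hc|]. intros i Hi; apply HM; [lia|lra]. }
      assert (B2 : Rabs (lin (snd c) N k x) <= b * M * INR (S N)).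
      { apply lin_bound; [intros a; apply Hc|]. intros i Hi; apply HM; [lia|lra]. }
      rewrite <- (pow2_abs (lin (fst c) N k x)), <- (pow2_abs (lin (snd c) N k x)).
      pose proof (Rabs_pos (lin (fst c) N k x)). pose proof (Rabs_pos (lin (snd c) N k x)).
      nra.
  - rewrite RInt_const, scal_R. lra.
Qed.


Lemma RInt_lower (h : R -> R) H a b v : (forall t, ex_derive h t) ->
  0 <= a -> a <= b -> b <= H -> (forall x, 0 <= x <= H -> 0 <= h x) ->
  (forall x, a <= x <= b -> v <= h x) -> (b - a) * v <= RInt h 0 H.
Proof.
  intros Hd H0a Hab HbH Hpos Hv.
  assert (E : forall u w, ex_RInt h u w) by (intros; apply ex_RInt_of_exd; auto).
  rewrite <- (RInt_Chasles h 0 a H) by auto.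
  rewrite <- (RInt_Chasles h a b H) by auto. rewrite !plus_R.
  assert (P1 : 0 <= RInt h 0 a) by (apply RInt_ge_0; auto; intros; apply Hpos; lra).
  assert (P3 : 0 <= RInt h b H) by (apply RInt_ge_0; auto; intros; apply Hpos; lra).
  assert (P2 : (b - a) * v <= RInt h a b).
  { replace ((b - a) * v) with (RInt (fun _ => v) a b) by (rewrite RInt_const; reflexivity).
    apply RInt_le; auto. apply ex_RInt_const.
    intros; apply Hv; lra. }
  change (plus (RInt h a b) (RInt h b H)) with (RInt h a b + RInt h b H). lra.
Qed.

Lemma coef_inv lam k : 1 <= lam ->
  fst (Nat.iter k (Tc lam) e0) 0%nat ^ 2 + snd (Nat.iter k (Tc lam) e0) 0%nat ^ 2 = lam ^ (2 * k)
  /\ forall a, (1 <= a)%nat -> lam * Rabs (fst (Nat.iter k (Tc lam) e0) a) <= (2 * lam) ^ k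
                            /\ lam * Rabs (snd (Nat.iter k (Tc lam) e0) a) <= (2 * lam) ^ k.
Proof.
  intros Hl. induction k as [|k [IH1 IH2]].
  - simpl. split; [ring|]. intros a Ha. destruct a; [lia|]. rewrite Rabs_R0. lra.
  - set (c := Nat.iter k (Tc lam) e0) in *. simpl Nat.iter. fold c.
    assert (Hp : 0 < lam ^ k) by (apply pow_lt; lra).
    assert (Hq : lam ^ k <= (2 * lam) ^ k) by (apply pow_incr; lra).
    assert (F0 : Rabs (fst c 0%nat) <= lam ^ k).
    { assert (Q : fst c 0%nat ^ 2 <= (lam ^ k) ^ 2).
      { replace ((lam ^ k) ^ 2) with (lam ^ (2 * k)) by (rewrite <- pow_mult; f_equal; lia).
        rewrite <- IH1. nra. }
      apply Rabs_le; split; nra. }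
    assert (G0 : Rabs (snd c 0%nat) <= lam ^ k).
    { assert (Q : snd c 0%nat ^ 2 <= (lam ^ k) ^ 2).
      { replace ((lam ^ k) ^ 2) with (lam ^ (2 * k)) by (rewrite <- pow_mult; f_equal; lia).
        rewrite <- IH1. nra. }
      apply Rabs_le; split; nra. }
    split.
    + unfold Tc; simpl fst; simpl snd; simpl sh. replace (2 * S k)%nat with (2 + 2 * k)%nat by lia. rewrite pow_add, <- IH1. simpl. ring.
    + intros a Ha. unfold Tc; simpl fst; simpl snd.
      assert (Hsh : forall f : nat -> R, Rabs (f 0%nat) <= lam ^ k ->
                (forall a, (1 <= a)%nat -> lam * Rabs (f a) <= (2 * lam) ^ k) ->
                lam * Rabs (sh f a) <= lam * (2 * lam) ^ k).
      { intros f Hf0 Hf. destruct a as [|a]; [lia|]. simpl. destruct a as [|a].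
        - apply Rmult_le_compat_l; lra.
        - specialize (Hf (S a) ltac:(lia)). nra. }
      destruct (IH2 a Ha) as [A B].
      pose proof (Hsh (fst c) F0 (fun a H => proj1 (IH2 a H))) as S1.
      pose proof (Hsh (snd c) G0 (fun a H => proj2 (IH2 a H))) as S2.
      simpl pow. split.
      * eapply Rle_trans; [apply Rmult_le_compat_l; [lra|apply Rabs_triang]|].
        rewrite Rabs_mult, Rabs_Ropp, (Rabs_pos_eq lam) by lra. nra.
      * eapply Rle_trans; [apply Rmult_le_compat_l; [lra|apply Rabs_triang]|].
        rewrite Rabs_mult, (Rabs_pos_eq lam) by lra. nra.
Qed.

Lemma lin_split f N x : (0 < N)%nat ->
  lin f N 0 x = f 0%nat * chi x + sum_f_R0 (fun i => f (S i) * D (S i) x) (pred N).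
Proof.
  intros HN. unfold lin. rewrite decomp_sum by auto. simpl. f_equal.
  apply sum_eq; intros; rewrite Nat.add_0_r; reflexivity.
Qed.

Lemma rest_bound f N x b M : (0 < N)%nat -> (forall a, (1 <= a)%nat -> Rabs (f a) <= b) ->
  (forall i, (i <= N)%nat -> Rabs (D i x) <= M) ->
  Rabs (sum_f_R0 (fun i => f (S i) * D (S i) x) (pred N)) <= b * M * INR N.
Proof.
  intros HN Hf HD. eapply Rle_trans; [apply sum_f_R0_triangle|].
  replace N with (S (pred N)) at 2 by lia. rewrite <- sum_cte. apply sum_Rle. intros a Ha.
  rewrite Rabs_mult. apply Rmult_le_compat; try apply Rabs_pos; auto. apply Hf; lia. apply HD; lia.
Qed.

Lemma p_pointwise lam n x M : 1 <= lam ->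
  (forall i, (i <= n + 1)%nat -> Rabs (D i x) <= M) ->
  lam ^ (n + 1) * Rabs (chi x) - 2 * ((2 * lam) ^ (n + 1) / lam * M * INR (n + 1))
    <= Cmod (LP (n + 1) (Nat.iter (n + 1) (Tc lam) e0) x).
Proof.
  intros Hl HD. set (c := Nat.iter (n + 1) (Tc lam) e0).
  destruct (coef_inv lam (n + 1) Hl) as [I1 I2]. fold c in I1, I2.
  set (b := (2 * lam) ^ (n + 1) / lam).
  assert (Hb : forall f : nat -> R, (forall a, (1 <= a)%nat -> lam * Rabs (f a) <= (2 * lam) ^ (n + 1)) ->
     forall a, (1 <= a)%nat -> Rabs (f a) <= b).
  { intros f Hf a Ha. unfold b. apply Rmult_le_reg_l with lam; [lra|].
    replace (lam * ((2 * lam) ^ (n + 1) / lam)) with ((2 * lam) ^ (n + 1)) by (field; lra). auto. }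
  pose proof (rest_bound (fst c) (n+1) x b M ltac:(lia) (Hb _ (fun a H => proj1 (I2 a H))) HD) as R1.
  pose proof (rest_bound (snd c) (n+1) x b M ltac:(lia) (Hb _ (fun a H => proj2 (I2 a H))) HD) as R2.
  set (r1 := sum_f_R0 (fun i => fst c (S i) * D (S i) x) (pred (n + 1))) in *.
  set (r2 := sum_f_R0 (fun i => snd c (S i) * D (S i) x) (pred (n + 1))) in *.
  assert (E : LP (n + 1) c x = Cplus (fst c 0%nat * chi x, snd c 0%nat * chi x) (r1, r2)).
  { unfold LP. rewrite !lin_split by lia. reflexivity. }
  rewrite E.
  set (u := (fst c 0%nat * chi x, snd c 0%nat * chi x)).
  assert (Cu : Cmod u = lam ^ (n + 1) * Rabs (chi x)).
  { unfold u, Cmod; cbn [fst snd].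
    replace ((fst c 0%nat * chi x) ^ 2 + (snd c 0%nat * chi x) ^ 2)
      with ((lam ^ (n + 1) * Rabs (chi x)) ^ 2).
    - apply sqrt_pow2. apply Rmult_le_pos; [apply pow_le; lra|apply Rabs_pos].
    - rewrite Rpow_mult_distr, pow2_abs, <- pow_mult.
      replace ((n + 1) * 2)%nat with (2 * (n + 1))%nat by lia. rewrite <- I1. ring. }
  assert (Tr : Cmod u <= Cmod (Cplus u (r1, r2)) + Cmod (r1, r2)).
  { replace u with (Cplus (Cplus u (r1, r2)) (Copp (r1, r2))) at 1.
    - eapply Rle_trans; [apply Cmod_triangle|]. rewrite Cmod_opp. lra.
    - unfold Cplus, Copp, u; simpl. f_equal; ring. }
  pose proof (Cmod_le_sum (r1, r2)) as Cr. simpl in Cr.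
  rewrite <- (Rmult_1_r (INR (n + 1))) in R1, R2.
  replace (INR (n + 1)) with (INR (n + 1) * 1) by ring. lra.
Qed.


Lemma LP_smooth N c : smooth (LP N c).
Proof.
  intros k x. split.
  - change (re (LP N c)) with (lin (fst c) N 0). apply lin_ex_derive_n.
  - change (im (LP N c)) with (lin (snd c) N 0). apply lin_ex_derive_n.
Qed.

Lemma LP_periodic N c x : (forall a y, D a (y + 2 * PI) = D a y) -> LP N c (x + 2 * PI) = LP N c x.
Proof.
  intros H. unfold LP, lin. f_equal; apply sum_eq; intros i _; rewrite H; reflexivity.
Qed.

Lemma LP_line_schwartz N c b : HypN Line -> 0 <= b -> Bnd c b ->
  forall (a k : nat), exists M : R, forall x, Rabs x ^ a * Cmod (cDn k (LP N c) x) <= M.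
Proof.
  intros HL Hb Hc a k. rewrite cDn_LP.
  destruct (D_bound (N + k) 0 1 ltac:(lra)) as [Mx [HMx HD]].
  exists (2 * (b * Mx * INR (S N))). intros x.
  assert (Hp : 0 <= b * Mx * INR (S N)) by (apply Rmult_le_pos; [nra|apply pos_INR]).
  destruct (Rle_lt_dec x (1/4)) as [H1|H1]; [|destruct (Rle_lt_dec (3/4) x) as [H2|H2]].
  - unfold LPk. rewrite !lin_zero by (intros; apply HL; auto).
    replace (0, 0) with (RtoC 0) by reflexivity. rewrite Cmod_0, Rmult_0_r. lra.
  - unfold LPk. rewrite !lin_zero by (intros; apply HL; auto).
    replace (0, 0) with (RtoC 0) by reflexivity. rewrite Cmod_0, Rmult_0_r. lra.
  - assert (Ha : Rabs x ^ a <= 1).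
    { rewrite <- (pow1 a). apply pow_incr. split; [apply Rabs_pos|]. rewrite Rabs_pos_eq; lra. }
    assert (B1 : Rabs (lin (fst c) N k x) <= b * Mx * INR (S N)).
    { apply lin_bound; [intros; apply Hc|]. intros i Hi; apply HD; [lia|lra]. }
    assert (B2 : Rabs (lin (snd c) N k x) <= b * Mx * INR (S N)).
    { apply lin_bound; [intros; apply Hc|]. intros i Hi; apply HD; [lia|lra]. }
    pose proof (Cmod_le_sum (LPk N c k x)) as Cs. unfold LPk in Cs |- *. simpl in Cs.
    pose proof (Cmod_ge_0 (lin (fst c) N k x, lin (snd c) N k x)).
    pose proof (pow_le (Rabs x) a (Rabs_pos x)).
    apply Rle_trans with (1 * Cmod (lin (fst c) N k x, lin (snd c) N k x)).
    + apply Rmult_le_compat_r; lra.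
    + lra.
Qed.

Lemma modul_zero lam : modul lam (fun _ => (0, 0)) = (fun _ => (0, 0)).
Proof. extensionality x. unfold modul, Cmult; simpl. f_equal; ring. Qed.

Lemma antider_zero d x : antider d (fun _ => (0, 0)) x = (0, 0).
Proof.
  destruct d; simpl.
  - unfold cRInt, re, im; simpl.
    rewrite (RInt_ext (V:=R_CompleteNormedModule) (fun x : R => x * 0 - 0 * 0) (fun _ => 0)) by (intros; rewrite !Rmult_0_r; apply Rminus_0_r).
    rewrite (RInt_ext (V:=R_CompleteNormedModule) (fun x : R => x * 0 + 0 * 0) (fun _ => 0)) by (intros; rewrite !Rmult_0_r; apply Rplus_0_r).
    rewrite !RInt_const. unfold Cplus; simpl. f_equal; unfold scal; simpl; unfold mult; simpl; ring.
  - unfold cRInt_gen, re, im; simpl.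
    assert (Z : RInt_gen (fun _ : R => 0) (Rbar_locally m_infty) (at_point x) = 0).
    { apply is_RInt_gen_unique, is_RInt_gen_ev.
      apply (Filter_prod _ _ _ (fun _ => True) (fun _ => True)); [exists 0; auto|exact I|].
      intros a b _ _. pose proof (is_RInt_const (V:=R_NormedModule) a b 0) as Hc.
      rewrite scal_R, Rmult_0_r in Hc. exact Hc. }
    rewrite Z. reflexivity.
Qed.

Lemma neg_iter_zero d lam j : neg_iter d lam j (fun _ => (0, 0)) = (fun _ => (0, 0)).
Proof.
  induction j; [reflexivity|]. change (neg_iter d lam (S j) (fun _ => (0,0)))
    with (neg_step d lam (neg_iter d lam j (fun _ => (0,0)))).
  rewrite IHj. extensionality x. unfold neg_step. rewrite modul_zero, antider_zero.
  unfold Cmult; simpl. f_equal; ring.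
Qed.

Lemma Cmod_LP_M lam N c x : 0 <= lam -> Cmod (LP N (Mc lam c) x) = lam * Cmod (LP N c x).
Proof.
  intros Hl. rewrite LP_M, Cmod_mult. f_equal. unfold Cmod; simpl.
  replace (0 * (0 * 1) + lam * (lam * 1)) with (lam ^ 2) by ring. apply sqrt_pow2; auto.
Qed.

Lemma LP_Te0_snd lam N x : (1 <= N)%nat -> snd (LP N (Tc lam e0) x) = lam * chi x.
Proof.
  intros HN. change (snd (LP N (Tc lam e0) x)) with (lin (snd (Tc lam e0)) N 0 x). rewrite Tc2.
  - rewrite lin_split by lia. unfold e0; simpl.
    rewrite (lin_ext (fun _ => 0) (fun a => 0 * 0)) by (intros; ring). rewrite lin_scal.
    rewrite (sum_eq _ (fun _ => 0)) by (intros; ring). rewrite sum_cte. ring.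
  - unfold e0; simpl. destruct N; [lia|reflexivity].
  - reflexivity.
Qed.


Definition GoodS (d : setting) : Prop :=
  match d with
  | Torus => (forall a y, D a (y + 2 * PI) = D a y) /\
             (forall a y, - PI <= y <= PI -> (y <= 1/4 \/ 3/4 <= y) -> D a y = 0)
  | Line => forall a t, (t <= 1/4 \/ 3/4 <= t) -> D a t = 0
  end.

Lemma GoodS_Hyp d : GoodS d -> Hyp d.
Proof.
  destruct d; simpl; auto. intros [P Z]. pose proof PI_RGT_0.
  assert (Z0 : forall a, D a 0 = 0) by (intros; apply Z; lra).
  split; auto. intros a. rewrite <- (Rplus_0_l (2 * PI)), P. auto.
Qed.

Lemma GoodS_HypN d : GoodS d -> HypN d.
Proof. destruct d; simpl; auto. Qed.

Lemma per_nat (f : R -> C) T : (forall y, f (y + T) = f y) ->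
  forall k y, f (y + INR k * T) = f y.
Proof.
  intros H k. induction k; intros y.
  - simpl. rewrite Rmult_0_l, Rplus_0_r. reflexivity.
  - rewrite S_INR. replace (y + (INR k + 1) * T) with ((y + INR k * T) + T) by ring.
    rewrite H. apply IHk.
Qed.

Lemma per_Z (f : R -> C) T : (forall y, f (y + T) = f y) ->
  forall z y, f (y + IZR z * T) = f y.
Proof.
  intros H z y. destruct (Z_le_gt_dec 0 z) as [Hz|Hz].
  - rewrite <- (Z2Nat.id z Hz), <- INR_IZR_INZ. apply per_nat; auto.
  - replace z with (- Z.of_nat (Z.to_nat (- z)))%Z by lia.
    rewrite opp_IZR, <- INR_IZR_INZ.
    set (k := Z.to_nat (- z)).
    rewrite <- (per_nat f T H k (y + - INR k * T)). f_equal. ring.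
Qed.

Lemma Cmod_ge_snd z : Rabs (snd z) <= Cmod z.
Proof.
  unfold Cmod. rewrite <- (sqrt_pow2 (Rabs (snd z))) by apply Rabs_pos. apply sqrt_le_1_alt.
  rewrite pow2_abs. pose proof (pow2_ge_0 (fst z)). lra.
Qed.

Lemma Cmod_iterM lam N k c x : 0 <= lam ->
  Cmod (LP N (Nat.iter k (Mc lam) c) x) = lam ^ k * Cmod (LP N c x).
Proof.
  intros Hl. induction k; simpl; [ring|]. rewrite Cmod_LP_M by auto. rewrite IHk. ring.
Qed.

Lemma pfun_periodic lam n : GoodS Torus -> forall y, pfun lam n (y + 2 * PI) = pfun lam n y.
Proof. intros [P _] y. unfold pfun. apply LP_periodic; auto. Qed.

Lemma p_nonzero d lam n : GoodS d -> 1 <= lam -> (1 <= n)%nat -> 0 < chi (1/2) ->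
  exists x0, 0 < x0 < hi d /\ pfun lam n x0 <> (0, 0).
Proof.
  intros Hg Hl Hn Hc. apply NNPP. intros Hno.
  assert (Hin : forall x, 0 < x < hi d -> pfun lam n x = (0, 0)).
  { intros x Hx. destruct (classic (pfun lam n x = (0, 0))) as [E|E]; auto.
    exfalso; apply Hno; exists x; auto. }
  assert (Zall : forall x, pfun lam n x = (0, 0)).
  { intros x. destruct d.
    - pose proof PI_RGT_0 as Hpi.
      set (z := (up (x / (2 * PI)) - 1)%Z).
      destruct (archimed (x / (2 * PI))) as [A1 A2].
      assert (Iz : IZR z <= x / (2 * PI) < IZR z + 1) by (unfold z; rewrite minus_IZR; lra).
      set (x' := x - IZR z * (2 * PI)).
      assert (Ix : 0 <= x' < 2 * PI).
      { unfold x'. destruct Iz as [I1 I2].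
        apply Rmult_le_compat_r with (r := 2 * PI) in I1; [|lra].
        apply Rmult_lt_compat_r with (r := 2 * PI) in I2; [|lra].
        replace (x / (2 * PI) * (2 * PI)) with x in I1, I2 by (field; lra). lra. }
      replace x with (x' + IZR z * (2 * PI)) by (unfold x'; ring).
      rewrite (per_Z (pfun lam n) (2 * PI) (pfun_periodic lam n Hg)).
      destruct (Req_dec x' 0) as [E|E].
      + rewrite E. unfold pfun. apply LP_zero. intros a.
        destruct Hg as [_ Z]. apply Z; lra.
      + apply Hin. simpl. lra.
    - destruct (Rle_lt_dec x (1/4)) as [H1|H1]; [|destruct (Rle_lt_dec (3/4) x) as [H2|H2]].
      + unfold pfun. apply LP_zero. intros; apply Hg; auto.
      + unfold pfun. apply LP_zero. intros; apply Hg; auto.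
      + apply Hin. simpl. lra. }
  assert (Ep : pfun lam n = (fun _ => (0, 0))) by (extensionality x; apply Zall).
  destruct (neg_iter_formula d lam n n (GoodS_Hyp d Hg) (le_n n)) as [E _].
  rewrite Ep, neg_iter_zero in E.
  assert (E2 := f_equal (fun f => Cmod (f (1/2))) E). simpl in E2.
  unfold cj in E2. rewrite Cmod_iterM in E2 by lra.
  replace (n + 1 - n)%nat with 1%nat in E2 by lia. simpl Nat.iter in E2.
  pose proof (Cmod_ge_snd (LP (n + 1) (Tc lam e0) (1/2))) as C1.
  rewrite LP_Te0_snd in C1 by lia.
  replace (0, 0) with (RtoC 0) in E2 by reflexivity. rewrite Cmod_0 in E2.
  assert (0 < lam ^ n) by (apply pow_lt; lra).
  assert (0 < lam * chi (1/2)) by (apply Rmult_lt_0_compat; lra).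
  rewrite Rabs_pos_eq in C1 by lra.
  assert (0 < lam ^ n * Cmod (LP (n + 1) (Tc lam e0) (1 / 2))) by (apply Rmult_lt_0_compat; lra).
  lra.
Qed.


Lemma sq_lin_nonneg f g N k x : 0 <= lin f N k x ^ 2 + lin g N k x ^ 2.
Proof. pose proof (pow2_ge_0 (lin f N k x)). pose proof (pow2_ge_0 (lin g N k x)). lra. Qed.

Lemma L2sq_pos d N c x0 : HypN d -> 0 < x0 < hi d -> LP N c x0 <> (0, 0) -> 0 < L2sq d (LP N c).
Proof.
  intros Hd Hx Hne. change (LP N c) with (LPk N c 0). rewrite L2sq_LPk by auto.
  set (h := fun x => lin (fst c) N 0 x ^ 2 + lin (snd c) N 0 x ^ 2).
  assert (Hh0 : 0 < h x0).
  { unfold h. change (lin (fst c) N 0 x0) with (fst (LP N c x0)).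
    change (lin (snd c) N 0 x0) with (snd (LP N c x0)). rewrite <- Cmod2.
    apply pow_lt. apply Cmod_gt_0. exact Hne. }
  assert (Hc : continuity_pt h x0).
  { apply continuity_pt_filterlim. apply (ex_derive_continuous h). apply sq_lin_exd. }
  destruct (Hc (h x0 / 2) ltac:(lra)) as [alp [Halp Hcl]].
  set (dl := Rmin (alp / 2) (Rmin (x0 / 2) ((hi d - x0) / 2))).
  assert (Hdl : 0 < dl).
  { unfold dl. apply Rmin_pos; [lra|apply Rmin_pos; lra]. }
  assert (D1 : dl <= alp / 2) by apply Rmin_l.
  assert (D2 : dl <= x0 / 2) by (eapply Rle_trans; [apply Rmin_r|apply Rmin_l]).
  assert (D3 : dl <= (hi d - x0) / 2) by (eapply Rle_trans; [apply Rmin_r|apply Rmin_r]).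
  assert (L : (x0 + dl - (x0 - dl)) * (h x0 / 2) <= RInt h 0 (hi d)).
  { apply RInt_lower.
    - intros; apply sq_lin_exd.
    - lra. - lra. - lra.
    - intros; apply sq_lin_nonneg.
    - intros x Hxx. destruct (Req_dec x x0) as [->|Hne']; [lra|].
      assert (R_dist (h x) (h x0) < h x0 / 2).
      { apply Hcl. split; [split; [exact I|auto]|]. unfold R_dist. apply Rabs_def1; lra. }
      unfold R_dist in H. apply Rabs_def2 in H. lra. }
  assert (0 < (x0 + dl - (x0 - dl)) * (h x0 / 2)) by (apply Rmult_lt_0_compat; lra).
  lra.
Qed.

Lemma L2sq_big d lam n M delta : HypN d -> 1 <= lam -> 0 < delta ->
  (forall i x, (i <= n + 1)%nat -> 0 <= x <= hi d -> Rabs (D i x) <= M) ->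
  (forall x, 7/16 <= x <= 9/16 -> delta <= chi x) ->
  2 ^ (n + 3) * M * INR (n + 1) / delta <= lam ->
  1/8 * (lam ^ (n + 1) * delta / 2) ^ 2 <= L2sq d (pfun lam n).
Proof.
  intros Hd Hl Hdel HM Hchi Hlam.
  assert (Hhi : 1 <= hi d) by (destruct d; simpl; [pose proof PI2_1; lra|lra]).
  assert (E0 : cj lam n 0 = Nat.iter (n + 1) (Tc lam) e0) by (unfold cj; simpl; rewrite Nat.sub_0_r; reflexivity).
  unfold pfun. change (LP (n + 1) (cj lam n 0)) with (LPk (n + 1) (cj lam n 0) 0).
  rewrite L2sq_LPk by auto.
  replace (1/8) with (9/16 - 7/16) by field.
  apply RInt_lower.
  - intros; apply sq_lin_exd.
  - lra. - lra. - lra.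
  - intros; apply sq_lin_nonneg.
  - intros x Hx.
    change (lin (fst (cj lam n 0)) (n + 1) 0 x) with (fst (LP (n + 1) (cj lam n 0) x)).
    change (lin (snd (cj lam n 0)) (n + 1) 0 x) with (snd (LP (n + 1) (cj lam n 0) x)).
    rewrite <- Cmod2, E0.
    pose proof (p_pointwise lam n x M Hl (fun i Hi => HM i x Hi ltac:(lra))) as P.
    assert (Hc : delta <= Rabs (chi x)) by (rewrite Rabs_pos_eq; [apply Hchi; lra| pose proof (Hchi x Hx); lra]).
    set (P0 := lam ^ n) in *.
    assert (HP0 : 0 < P0) by (apply pow_lt; lra).
    assert (E1 : lam ^ (n + 1) = lam * P0) by (unfold P0; rewrite pow_add; simpl; ring).
    assert (E2 : (2 * lam) ^ (n + 1) / lam = 2 ^ (n + 1) * P0).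
    { unfold P0. rewrite Rpow_mult_distr. replace (lam ^ (n + 1)) with (lam * lam ^ n) by (rewrite pow_add; simpl; ring). field. lra. }
    assert (E3 : 2 ^ (n + 3) = 4 * 2 ^ (n + 1)).
    { replace (n + 3)%nat with (n + 1 + 2)%nat by lia. rewrite pow_add. simpl. ring. }
    set (Q := 2 ^ (n + 1) * M * INR (n + 1)).
    assert (HQ : 4 * Q <= lam * delta).
    { rewrite E3 in Hlam. unfold Q. apply Rmult_le_reg_r with (/ delta).
      - apply Rinv_0_lt_compat; lra.
      - replace (lam * delta * / delta) with lam by (field; lra). unfold Rdiv in Hlam. lra. }
    rewrite E1, E2 in P. rewrite E1.
    assert (Hb : lam * P0 * delta / 2 <= Cmod (LP (n + 1) (Nat.iter (n + 1) (Tc lam) e0) x)).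
    { eapply Rle_trans; [|exact P].
      replace (2 * (2 ^ (n + 1) * P0 * M * INR (n + 1))) with (2 * P0 * Q) by (unfold Q; ring).
      assert (P0 * (4 * Q) <= P0 * (lam * delta)) by (apply Rmult_le_compat_l; lra).
      assert (lam * P0 * delta <= lam * P0 * Rabs (chi x)).
      { apply Rmult_le_compat_l; [|exact Hc]. nra. }
      nra. }
    assert (0 <= lam * P0 * delta / 2) by (assert (0 < lam * P0) by nra; nra).
    apply pow_incr. lra.
Qed.


Lemma nat_above (r : R) : exists N : nat, r <= INR N.
Proof.
  destruct (archimed r) as [A1 _]. destruct (Z_le_gt_dec 0 (up r)) as [Hz|Hz].
  - exists (Z.to_nat (up r)). rewrite INR_IZR_INZ, Z2Nat.id by auto. lra.
  - exists 0%nat. simpl. assert (Hz2 : (up r < 0)%Z) by lia. apply IZR_lt in Hz2. lra.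
Qed.

Lemma term_le_sum (f : nat -> R) i N : (forall k, 0 <= f k) -> (i <= N)%nat -> f i <= sum_f_R0 f N.
Proof.
  intros Hf Hi. induction N.
  - replace i with 0%nat by lia. simpl. lra.
  - simpl. destruct (Nat.eq_dec i (S N)) as [->|Hne].
    + pose proof (cond_pos_sum f N Hf). lra.
    + pose proof (IHN ltac:(lia)). pose proof (Hf (S N)). lra.
Qed.

Lemma tuple_nonneg d m n lam g : 0 <= tuple_Hnorm d m n lam g.
Proof.
  unfold tuple_Hnorm. rewrite sum_n_Reals. apply cond_pos_sum. intros; apply sqrt_pos.
Qed.

Lemma div_nonneg a b : 0 <= a -> 0 <= b -> 0 <= a / b.
Proof.
  intros Ha Hb. destruct (Req_dec b 0) as [->|Hne].
  - unfold Rdiv. rewrite Rinv_0. lra.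
  - apply Rdiv_le_0_compat; lra.
Qed.

Lemma main_bound d n m delta : GoodS d -> (1 <= n)%nat -> 0 < delta ->
  (forall x, 7/16 <= x <= 9/16 -> delta <= chi x) ->
  exists C, forall l : nat, (1 <= l)%nat ->
    tuple_Hnorm d m n (INR l) (pfun (INR l) n) <= C * L2norm d (pfun (INR l) n).
Proof.
  intros Hg Hn Hdel Hchi.
  pose proof (hi_pos d) as Hhi.
  destruct (D_bound (n + 1 + m) 0 (hi d) ltac:(lra)) as [M [HM0 HM]].
  set (Lam := 2 ^ (n + 3) * M * INR (n + 1) / delta).
  destruct (nat_above Lam) as [L0 HL0].
  set (Q := M * INR (S (n + 1)) * sqrt (INR (S m) * hi d * 2)).
  assert (HQ : 0 <= Q) by (unfold Q; apply Rmult_le_pos; [apply Rmult_le_pos; [lra|apply pos_INR]|apply sqrt_pos]).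
  assert (Hs8 : 0 < sqrt (1/8)) by (apply sqrt_lt_R0; lra).
  set (Cbig := INR (S n) * (2 ^ (n + 1) * Q) / (delta / 2 * sqrt (1/8))).
  assert (HCb : 0 <= Cbig).
  { unfold Cbig. apply div_nonneg; [|nra]. apply Rmult_le_pos; [apply pos_INR|].
    apply Rmult_le_pos; [apply pow_le; lra|lra]. }
  set (ratio := fun l : nat => tuple_Hnorm d m n (INR l) (pfun (INR l) n) / L2norm d (pfun (INR l) n)).
  assert (Hr : forall l, 0 <= ratio l) by (intros; apply div_nonneg; [apply tuple_nonneg|apply sqrt_pos]).
  pose proof (cond_pos_sum ratio L0 Hr) as HS.
  exists (Cbig + sum_f_R0 ratio L0). intros l Hl.
  set (lam := INR l).
  assert (Hlam : 1 <= lam) by (unfold lam; apply (le_INR 1); auto).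
  assert (Hpos : 0 < L2norm d (pfun lam n)).
  { apply sqrt_lt_R0. destruct (p_nonzero d lam n Hg Hlam Hn) as [x0 [Hx0 Hne]].
    - pose proof (Hchi (1/2) ltac:(lra)). lra.
    - unfold pfun in *. apply (L2sq_pos d _ _ x0); auto. apply GoodS_HypN; auto. }
  pose proof (tuple_nonneg d m n lam (pfun lam n)) as Ht.
  destruct (le_lt_dec l L0) as [Hle|Hgt].
  - assert (E : tuple_Hnorm d m n lam (pfun lam n) = ratio l * L2norm d (pfun lam n)).
    { unfold ratio. fold lam. field. lra. }
    rewrite E. apply Rmult_le_compat_r; [lra|].
    pose proof (term_le_sum ratio l L0 Hr Hle). lra.
  - assert (HlL : Lam <= lam) by (unfold lam; apply lt_INR in Hgt; lra).
    assert (Hb : 0 <= (2 * lam) ^ (n + 1)) by (apply pow_le; lra).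
    assert (T1 : tuple_Hnorm d m n lam (pfun lam n) <= INR (S n) * ((2 * lam) ^ (n + 1) * Q)).
    { unfold tuple_Hnorm. rewrite sum_n_Reals, Rmult_comm, <- sum_cte. apply sum_Rle. intros j Hj.
      destruct (neg_iter_formula d lam n j (GoodS_Hyp d Hg) Hj) as [E _]. rewrite E.
      eapply Rle_trans.
      - apply (Hnorm_bound d m (n + 1) (cj lam n j) ((2 * lam) ^ (n + 1)) M).
        + apply GoodS_HypN; auto.
        + exact Hb.
        + apply Bnd_cj; auto.
        + intros i x Hi Hx. apply HM; [lia|lra].
      - set (Y := (2 * lam) ^ (n + 1) * M * INR (S (n + 1))).
        assert (HY : 0 <= Y) by (unfold Y; apply Rmult_le_pos; [nra|apply pos_INR]).
        replace (INR (S m) * (hi d * (2 * Y ^ 2))) with ((INR (S m) * hi d * 2) * Y ^ 2) by ring.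
        assert (HA : 0 <= INR (S m) * hi d * 2).
        { apply Rmult_le_pos; [apply Rmult_le_pos; [apply pos_INR|lra]|lra]. }
        pose proof (pow2_ge_0 Y).
        rewrite sqrt_mult, sqrt_pow2 by assumption.
        unfold Y, Q. lra. }
    assert (T2 : sqrt (1/8) * (lam ^ (n + 1) * delta / 2) <= L2norm d (pfun lam n)).
    { unfold L2norm. rewrite <- (sqrt_pow2 (lam ^ (n + 1) * delta / 2)).
      - rewrite <- sqrt_mult by (try lra; apply pow2_ge_0). apply sqrt_le_1_alt.
        apply (L2sq_big d lam n M delta); auto.
        + apply GoodS_HypN; auto.
        + intros i x Hi Hx. apply HM; [lia|lra].
      - assert (0 < lam ^ (n + 1)) by (apply pow_lt; lra). nra. }
    assert (E2 : (2 * lam) ^ (n + 1) = 2 ^ (n + 1) * lam ^ (n + 1)) by apply Rpow_mult_distr.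
    assert (T3 : INR (S n) * ((2 * lam) ^ (n + 1) * Q) = Cbig * (sqrt (1/8) * (lam ^ (n + 1) * delta / 2))).
    { unfold Cbig. rewrite E2. field. split; lra. }
    assert (Cbig * (sqrt (1/8) * (lam ^ (n + 1) * delta / 2)) <= Cbig * L2norm d (pfun lam n))
      by (apply Rmult_le_compat_l; auto).
    assert (0 <= sum_f_R0 ratio L0 * L2norm d (pfun lam n)) by (apply Rmult_le_pos; lra).
    lra.
Qed.


Lemma schwartz_LP d N c b : GoodS d -> 0 <= b -> Bnd c b -> schwartz d (LP N c).
Proof.
  intros Hg Hb Hc. destruct d; simpl; split; try apply LP_smooth.
  - intros x. apply LP_periodic. apply Hg.
  - apply (LP_line_schwartz N c b); auto.
Qed.

Lemma supp_LP d N c : GoodS d -> supported_in_unit d (LP N c).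
Proof.
  intros Hg. destruct d; simpl; exists (3/4); split; try lra.
  - intros x Hx Hax. apply LP_zero. intros a. destruct Hg as [_ Z]. apply Z; auto.
    unfold Rabs in Hax; destruct Rcase_abs in Hax; lra.
  - intros x Hax. apply LP_zero. intros a. apply Hg.
    unfold Rabs in Hax; destruct Rcase_abs in Hax; lra.
Qed.

Lemma final_abs d n delta : GoodS d -> (1 <= n)%nat -> 0 < delta ->
  (forall x, 7/16 <= x <= 9/16 -> delta <= chi x) ->
  exists Cst : nat -> R,
  forall lam : nat, (1 <= lam)%nat ->
  exists p : R -> C,
    (exists x, p x <> RtoC 0) /\
    schwartz d p /\
    (forall j, (j < n)%nat -> neg_step_defined d (INR lam) (neg_iter d (INR lam) j p)) /\
    (forall j, (1 <= j <= n)%nat -> schwartz d (neg_iter d (INR lam) j p)) /\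
    (forall m : nat, tuple_Hnorm d m n (INR lam) p <= Cst m * L2norm d p) /\
    ((forall j, (j <= n)%nat -> supported_in_unit d (neg_iter d (INR lam) j p)) \/
     (forall j, (j <= n)%nat -> fourier_supported_in_unit d (neg_iter d (INR lam) j p))).
Proof.
  intros Hg Hn Hdel Hchi.
  pose (Cf := fun m => proj1_sig (constructive_indefinite_description _ (main_bound d n m delta Hg Hn Hdel Hchi))).
  exists Cf. intros l Hl. exists (pfun (INR l) n).
  assert (Hlam : 1 <= INR l) by (apply (le_INR 1); auto).
  assert (Hb : 0 <= (2 * INR l) ^ (n + 1)) by (apply pow_le; lra).
  split; [|split; [|split; [|split; [|split]]]].
  - destruct (p_nonzero d (INR l) n Hg Hlam Hn) as [x0 [_ H]].
    + pose proof (Hchi (1/2) ltac:(lra)). lra.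
    + exists x0. exact H.
  - unfold pfun. apply (schwartz_LP d _ _ _ Hg Hb). apply Bnd_cj; auto. lia.
  - intros j Hj. apply (neg_iter_formula d (INR l) n j (GoodS_Hyp d Hg)); lia.
  - intros j Hj. rewrite (proj1 (neg_iter_formula d (INR l) n j (GoodS_Hyp d Hg) ltac:(lia))).
    apply (schwartz_LP d _ _ _ Hg Hb). apply Bnd_cj; auto. lia.
  - intros m. unfold Cf. destruct (constructive_indefinite_description _ _) as [C HC]. simpl.
    apply HC; auto.
  - left. intros j Hj. rewrite (proj1 (neg_iter_formula d (INR l) n j (GoodS_Hyp d Hg) Hj)).
    apply supp_LP; auto.
Qed.

End Abs.

Lemma ev_chi_der e : forall a x, is_derive (Derive_n (ev e) a) x (Derive_n (ev e) (S a) x).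
Proof.
  intros a x.
  assert (E : Derive_n (ev e) a = ev (Nat.iter a dx e)) by (extensionality t; apply ev_Derive_n).
  rewrite E, ev_Derive_n. simpl. apply ev_derive.
Qed.

Lemma bf0_ge y0 y : 0 < y0 -> y0 <= y -> exp (- / y0) <= bf 0 y.
Proof.
  intros H0 H. rewrite bf_pos_eq by lra. simpl. rewrite Rmult_1_l.
  destruct (Req_dec y y0) as [->|Hne]; [lra|].
  left. apply exp_increasing. apply Ropp_lt_contravar. apply Rinv_lt_contravar; [nra|lra].
Qed.

Lemma cos_le_decr x y : 0 <= x -> x <= y -> y <= PI -> cos y <= cos x.
Proof.
  intros H1 H2 H3. destruct (Req_dec x y) as [->|Hne]; [lra|].
  left. apply cos_decreasing_1; lra.
Qed.

Definition gL : ex := EAdd (ECst (1/16)) (EMul (ECst (-1))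
  (EMul (EAdd EVar (ECst (-1/2))) (EAdd EVar (ECst (-1/2))))).
Definition chiL : R -> R := ev (EBf 0 gL).

Lemma gL_ev x : ev gL x = 1/16 - (x - 1/2) ^ 2.
Proof. unfold gL; simpl. field. Qed.

Lemma chiL_good : GoodS chiL Line.
Proof.
  simpl. intros a t Ht. apply bump_vanish. rewrite gL_ev. destruct Ht; nra.
Qed.

Lemma chiL_low x : 7/16 <= x <= 9/16 -> exp (- / (15/256)) <= chiL x.
Proof.
  intros Hx. unfold chiL. simpl ev. apply bf0_ge; [lra|]. nra.
Qed.

Definition gT : ex := EAdd (ECos (EAdd EVar (ECst (-1/2)))) (ECst (- cos (1/4))).
Definition chiT : R -> R := ev (EBf 0 gT).

Lemma gT_ev x : ev gT x = cos (x - 1/2) - cos (1/4).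
Proof. unfold gT; simpl. unfold Rminus. f_equal. f_equal. field. Qed.

Lemma chiT_per y : chiT (y + 2 * PI) = chiT y.
Proof.
  unfold chiT. cbn [ev]. f_equal. rewrite !gT_ev. f_equal.
  replace (y + 2 * PI - 1/2) with ((y - 1/2) + 2 * INR 1 * PI) by (simpl; ring).
  apply cos_period.
Qed.

Lemma cos_small_le u : - PI - 1/2 <= u <= PI - 1/2 -> (u <= -1/4 \/ 1/4 <= u) -> cos u <= cos (1/4).
Proof.
  intros Hu Hc. pose proof PI2_1 as Hpi.
  destruct Hc as [Hc|Hc].
  - rewrite <- (cos_neg u). destruct (Rle_lt_dec (- u) PI) as [H|H].
    + apply cos_le_decr; lra.
    + replace (cos (- u)) with (cos (2 * PI + u)).
      * apply cos_le_decr; lra.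
      * rewrite cos_neg. replace (2 * PI + u) with (u + 2 * INR 1 * PI) by (simpl; ring).
        apply cos_period.
  - apply cos_le_decr; lra.
Qed.

Lemma chiT_good : GoodS chiT Torus.
Proof.
  simpl. split.
  - intros a y. rewrite <- Derive_n_comp_trans. apply Derive_n_ext. intros t. apply chiT_per.
  - intros a y Hy Hc. apply bump_vanish. rewrite gT_ev.
    pose proof (cos_small_le (y - 1/2) ltac:(lra) ltac:(lra)). lra.
Qed.

Lemma chiT_low x : 7/16 <= x <= 9/16 -> exp (- / (cos (1/16) - cos (1/4))) <= chiT x.
Proof.
  intros Hx. pose proof PI2_1.
  assert (Hc : cos (1/4) < cos (1/16)) by (apply cos_decreasing_1; lra).
  unfold chiT. cbn [ev]. apply bf0_ge; [lra|]. rewrite gT_ev.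
  assert (cos (1/16) <= cos (x - 1/2)).
  { destruct (Rle_lt_dec 0 (x - 1/2)).
    - apply cos_le_decr; lra.
    - rewrite <- (cos_neg (x - 1/2)). apply cos_le_decr; lra. }
  lra.
Qed.

Theorem lemma4p1 :
  forall (d : setting) (n : nat), (1 <= n)%nat ->
  exists Cst : nat -> R,
  forall lam : nat, (1 <= lam)%nat ->
  exists p : R -> C,
    (exists x, p x <> RtoC 0) /\
    schwartz d p /\
    (forall j, (j < n)%nat -> neg_step_defined d (INR lam) (neg_iter d (INR lam) j p)) /\
    (forall j, (1 <= j <= n)%nat -> schwartz d (neg_iter d (INR lam) j p)) /\
    (forall m : nat, tuple_Hnorm d m n (INR lam) p <= Cst m * L2norm d p) /\
    ((forall j, (j <= n)%nat -> supported_in_unit d (neg_iter d (INR lam) j p)) \/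
     (forall j, (j <= n)%nat -> fourier_supported_in_unit d (neg_iter d (INR lam) j p))).
Proof.
  intros d n Hn. destruct d.
  - apply (final_abs chiT (ev_chi_der _) Torus n (exp (- / (cos (1/16) - cos (1/4))))).
    + apply chiT_good.
    + exact Hn.
    + apply exp_pos.
    + apply chiT_low.
  - apply (final_abs chiL (ev_chi_der _) Line n (exp (- / (15/256)))).
    + apply chiL_good.
    + exact Hn.
    + apply exp_pos.
    + apply chiL_low.
Qed.
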